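(* Let $k\ge 2$ and let $\mathcal{C}$ be the full flag code on $\mathbb{F}_q^{2k}$ constructed from a $k$-spread as described in the context. Let $\mathcal{F}=(\mathcal{F}_1,\ldots,\mathcal{F}_{2k-1})\in\mathcal{C}$ and let $\mathcal{X}=(\mathcal{X}_1,\ldots,\mathcal{X}_{2k-1})$ be a sequence of subspaces with $\mathcal{X}_i\subseteq\mathcal{F}_i$ for all $i$ and $\mathcal{X}_1=\cdots=\mathcal{X}_k=\{0\}$. If $\sum_{i=1}^{2k-1}d_S(\mathcal{F}_i,\mathcal{X}_i)\le k^2-1$, then there exists an index $i$ with $k<i<2k$ such that $\dim\mathcal{X}_i>2(i-k)$.
   Context: $q$ is a prime power; $d_S(\mathcal{U},\mathcal{V})=\dim(\mathcal{U}+\mathcal{V})-\dim(\mathcal{U}\cap\mathcal{V})$. Construction: let $\{\mathcal{S}_1,\ldots,\mathcal{S}_{q^k+1}\}$ be a $k$-spread of $\mathbb{F}_q^{2k}$ (a set of $q^k+1$ $k$-dimensional subspaces pairwise intersecting trivially), with full-rank $k\times 2k$ generator matrices $\mathrm{S}_i$. Let $\mathrm{W}_i=\begin{pmatrix}\mathrm{S}_i\\ \mathrm{S}_{i+1}\end{pmatrix}$ for $i\le q^k$ and $\mathrm{W}_{q^k+1}=\begin{pmatrix}\mathrm{S}_{q^k+1}\\ \mathrm{S}_1\end{pmatrix}$, let $\mathcal{W}_i^{(j)}$ be the row space of the first $j$ rows of $\mathrm{W}_i$, and $\mathcal{C}=\{(\mathcal{W}_i^{(1)},\ldots,\mathcal{W}_i^{(2k-1)}):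 1\le i\le q^k+1\}$. *)

(* Defs.v *)
From HB Require Import structures.
From mathcomp Require Import all_boot all_algebra all_field.
Set Implicit Arguments. Unset Strict Implicit. Unset Printing Implicit Defensive.
Import GRing.Theory.
Local Open Scope ring_scope.

(* Subspaces of F^n are represented (mathcomp mxalgebra style) by the row
   spaces of matrices with n columns; dimension is \rank. *)

Definition subspace_dist (F : fieldType) (m1 m2 n : nat)
  (U : 'M[F]_(m1, n)) (V : 'M[F]_(m2, n)) : nat :=
  (\rank (U + V)%MS - \rank (U :&: V)%MS)%N.

Definition is_spread (F : fieldType) (k N : nat) (S : 'I_N -> 'M[F]_(k, k + k)) :=
  (forall i, \rank (S i) = k) /\
  (forall i j, i != j -> (S i :&: S j)%MS = 0).

Definition spreadW (F : fieldType) (k N : nat) (S : 'I_N.+1 -> 'M[F]_(k, k + k))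
  (i : 'I_N.+1) : 'M[F]_(k + k, k + k) :=
  col_mx (S i) (S (ordS i)).

Definition first_rows (F : fieldType) (m n : nat) (j : nat) (W : 'M[F]_(m, n))
  : 'M[F]_(m, n) :=
  \matrix_(r, c) (if (r < j)%N then W r c else 0).

Definition flag_code_elt (F : fieldType) (k N : nat) (S : 'I_N.+1 -> 'M[F]_(k, k + k))
  (i : 'I_N.+1) (j : nat) : 'M[F]_(k + k, k + k) :=
  first_rows j (spreadW S i).

(* Main.v *)
Require Import Defs.
From HB Require Import structures.
From mathcomp Require Import all_boot all_algebra all_field.
From mathcomp Require Import zify.
Open Scope ring_scope. Close Scope ring_scope.
Import GRing.Theory.

Lemma first_rows_pid (F : fieldType) n j (W : 'M[F]_n) :
  first_rows j W = (pid_mx j *m W)%R.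
Proof.
apply/matrixP=> r c; rewrite !mxE.
rewrite (bigD1 r) //= big1 ?addr0; last first.
  move=> l nl; rewrite mxE.
  have -> : (nat_of_ord r == nat_of_ord l) = false by apply/negP => /eqP/val_inj E; rewrite E eqxx in nl.
  by rewrite mul0r.
rewrite mxE eqxx /=.
by case: (r < j)%N; rewrite ?mul1r ?mul0r.
Qed.

Lemma rank_first_rows (F : fieldType) n j (W : 'M[F]_n) :
  \rank W = n -> (j <= n)%N -> (j <= \rank (first_rows j W))%N.
Proof.
move=> hW hj; rewrite first_rows_pid.
have E : W = (pid_mx j *m W + copid_mx j *m W)%R.
  by rewrite -mulmxDl /copid_mx addrC subrK mul1mx.
have h1 := mxrank_add (pid_mx j *m W)%R (copid_mx j *m W)%R.
rewrite -E hW in h1.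
have h2 := mxrankM_maxl (copid_mx j : 'M[F]_n) W.
rewrite rank_copid_mx // in h2.
have h3 := leq_trans h1 (leq_add (leqnn _) h2). by rewrite -(leq_add2r (n - j)) subnKC.
Qed.

Lemma sum_id n : ((\sum_(0 <= j < n) j).*2 = n * n.-1)%N.
Proof.
elim: n => [|n IH]; first by rewrite big_geq.
rewrite big_nat_recr //= doubleD IH; case: n {IH} => //= n; rewrite -!muln2; nia.
Qed.

Local Open Scope ring_scope.

Theorem lemma4p12 (F : finFieldType) (q k : nat)
  (hq : #|{: F}| = q) (hk : (2 <= k)%N)
  (S : 'I_(q ^ k).+1 -> 'M[F]_(k, k + k))
  (hS : is_spread S)
  (i : 'I_(q ^ k).+1)
  (X : nat -> 'M[F]_(k + k))
  (hsub : forall j, (1 <= j <= (k + k).-1)%N -> (X j <= flag_code_elt S i j)%MS)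
  (hzero : forall j, (1 <= j <= k)%N -> X j = 0)
  (hdist : (\sum_(1 <= j < k + k) subspace_dist (flag_code_elt S i j) (X j)
              <= k ^ 2 - 1)%N) :
  exists j : nat, [/\ (k < j)%N, (j < k + k)%N & (2 * (j - k) < \rank (X j))%N].
Proof.
case: hS => hr hcap.
have qpos : (0 < (q ^ k)%N)%N.
  rewrite expn_gt0 -hq; apply/orP; left; apply/card_gt0P; by exists 0.
have hne : ordS i != i.
  apply/negP => /eqP /(congr1 val) /=.
  case: (ltnP i (q ^ k)%N) => hi.
    by rewrite modn_small // => /eqP; rewrite -[X in X == _]addn1 -{2}(addn0 i) eqn_add2l.
  have : val i = (q ^ k)%N by apply/eqP; rewrite eqn_leq hi andbT -ltnS; exact: ltn_ord i.
  by move=> ->; rewrite modnn; lia.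
have hW : \rank (spreadW S i) = (k + k)%N.
  rewrite /spreadW -(addsmxE (S i) (S (ordS i))).1.
  have := mxrank_sum_cap (S i) (S (ordS i)).
  rewrite hcap; last by rewrite eq_sym.
  by rewrite mxrank0 !hr addn0.
have hd : forall j, (j < k + k)%N ->
    (\rank (flag_code_elt S i j) - \rank (X j) <= subspace_dist (flag_code_elt S i j) (X j))%N.
  move=> j hj; rewrite /subspace_dist.
  have := mxrankS (addsmxSl (flag_code_elt S i j) (X j)).
  have := mxrankS (capmxSr (flag_code_elt S i j) (X j)).
  lia.
have hF : forall j, (j < k + k)%N -> (j <= \rank (flag_code_elt S i j))%N.
  by move=> j hj; apply: rank_first_rows => //; apply: ltnW.
case: (boolP [exists j : 'I_(k + k), (k < j)%N && (2 * (j - k) < \rank (X j))%N]) => [/existsP [j /andP [h1 h2]] | nP].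
  by exists j.
have hX : forall j, (k < j < k + k)%N -> (\rank (X j) <= 2 * (j - k))%N.
  move=> j /andP [h1 h2]; rewrite leqNgt; apply/negP => h3.
  move/negP: nP; apply; apply/existsP; by exists (Ordinal h2); rewrite /= h1 h3.
set g := fun j => if (j <= k)%N then j else (k + k - j)%N.
have hge : (\sum_(1 <= j < k + k) g j <=
    \sum_(1 <= j < k + k) subspace_dist (flag_code_elt S i j) (X j))%N.
  rewrite big_nat [X in (_ <= X)%N]big_nat; apply: leq_sum => j /andP [j1 j2].
  apply: leq_trans (hd j j2).
  have := hF j j2; rewrite /g; case: ifP => jk.
    by rewrite hzero ?j1 // mxrank0 subn0.
  have := hX j; rewrite j2 ltnNge jk /= => /(_ isT). lia.
have hsum : (\sum_(1 <= j < k + k) g j = k ^ 2)%N.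
  rewrite (@big_cat_nat _ _ _ k.+1) /=; [|lia|lia].
  rewrite (@eq_big_nat _ _ _ 1 k.+1 g id); last by move=> j /andP [_ h]; rewrite /g -ltnS h.
  rewrite (@eq_big_nat _ _ _ k.+1 (k + k) g (fun j => k + k - j)%N); last first.
    by move=> j /andP [h _]; rewrite /g leqNgt h.
  rewrite [X in (_ + X)%N]big_nat_rev /=.
  rewrite (@eq_big_nat _ _ _ k.+1 (k + k) _ (fun j => j - k)%N); last first.
    move=> j /andP [h1 h2]. lia.
  rewrite -(add1n k) big_addn.
  rewrite (@eq_big_nat _ _ _ 1 (k + k - k) _ id); last by move=> j _; rewrite addnK.
  have T1 := sum_id k.+1.
  have T2 := sum_id k.
  rewrite big_ltn // add0n in T1.
  rewrite big_ltn ?add0n in T2; last lia.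
  rewrite addKn add1n.
  move: T1 T2; rewrite -!muln2 /=.
  set a := (\sum_(1 <= j < k.+1) _)%N; set b := (\sum_(1 <= j < k) _)%N.
  move=> T1 T2; nia.
move: (leq_trans hge hdist); rewrite hsum.
have : (0 < k ^ 2)%N by rewrite expn_gt0; lia.
lia.
Qed.
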